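(* Let $\mathcal{N}(\mathcal{K})=(\mathcal{S},\mathcal{C},\mathcal{R},\mathcal{K})$ be a reaction-weighted chemical reaction network and let $\tilde{\mathcal{N}}(\tilde{\mathcal{B}})=(\tilde{\mathcal{S}},\tilde{\mathcal{C}},\tilde{\mathcal{C}}_K,\tilde{\mathcal{R}},\tilde{\mathcal{B}})$ be an improper reaction-weighted translation of $\mathcal{N}(\mathcal{K})$ (with associated maps $h$, $h_K$). Suppose that $(\tilde{\mathcal{S}},\tilde{\mathcal{C}},\tilde{\mathcal{R}})$ is weakly reversible, that its deficiency is $\tilde\delta=0$, that $\tilde S_I\subseteq\tilde S_K$, and that there is a resolving complex set $\tilde{\mathcal{C}}_R$ with $\tilde{\mathcal{C}}_I\cap\tilde{\mathcal{C}}_R=\emptyset$. Suppose furthermore that: for every $p'\in\tilde{\mathcal{C}}_I$ there is a $k'\in\tilde{\mathcal{C}}(\tilde{\mathcal{B}})$, $k'\ne p'$, such that for every $i'\in\tilde{\mathcal{C}}_R$ and every directed path in $(\tilde{\mathcal{C}},\tilde{\mathcal{R}})$ from $p'$ to $i'$, the complex $k'$ lies on that path. Then $\mathcal{N}(\mathcal{K})$ and $\tilde{\mathcal{N}}(\tilde{\mathcal{B}})$ are steady state resolvable.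
   Context: A chemical reaction network $(\mathcal{S},\mathcal{C},\mathcal{R})$ consists of species $X_1,\dots,X_n$, complexes $C_1,\dots,C_m$ (identified with indices $1,\dots,m$) with pairwise distinct stoichiometric vectors $y_i\in\mathbb{Z}_{\ge0}^n$, and reactions $\mathcal{R}\subseteq\mathcal{C}\times\mathcal{C}$ (no self-loops); it is viewed as a directed graph on $\mathcal{C}$. A path from $C_i$ to $C_j$ is a sequence of distinct complexes $C_i=C_{\nu(1)}\to\cdots\to C_{\nu(l)}=C_j$ with each arrow a reaction. Linkage classes are the connected components of the underlying undirected graph; the network is weakly reversible if every linkage class is strongly connected. The stoichiometric subspace is $S=\mathrm{span}\{y_j-y_i:(i,j)\in\mathcal{R}\}$, $s=\dim S$, and the deficiency is $\delta=m-\ell-s$ with $\ell$ the number of linkage classes. A reaction-weight set $\mathcal{K}=\{k(i,j)\}$ has $k(i,j)>0$ iff $(i,j)\in\mathcal{R}$ and $k(i,j)=0$ otherwise. The mass action system of $\mathcal{N}(\mathcal{K})$ is $\dot{\mathbf{x}}=YA(\mathcal{K})\Psi(\mathbf{x})$, where $Y$ has columns $y_i$, $A(\mathcal{K})_{ij}=k(j,i)$ for $i\ne j$, $A(\mathcal{K})_{ii}=-\sum_l k(i,l)$, $\Psi(\mathbf{x})_i=\mathbf{x}^{y_i}$. A generalized chemical reaction network $(\mathcal{S},\mathcal{C},\mathcal{C}_K,\mathcal{R})$ is a network $(\mathcal{S},\mathcal{C},\mathcal{R})$ with kinetic complexes $(C_K)_i$ (vectors $(y_K)_i$) in one-to-one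 correspondence with $\mathcal{C}$; its generalized mass action system is $\dot{\mathbf{x}}=YA(\mathcal{K})\Psi_K(\mathbf{x})$ with $\Psi_K(\mathbf{x})_i=\mathbf{x}^{(y_K)_i}$. Graph notions refer to $(\mathcal{S},\mathcal{C},\mathcal{R})$. Kinetic-order subspace: $S_K=\mathrm{span}\{(y_K)_j-(y_K)_i:(i,j)\in\mathcal{R}\}$. Kinetically-relevant complexes $\mathcal{C}(\mathcal{K})$: those $i$ with $\sum_{j\ne i}k(i,j)(y_j-y_i)\ne0$. Reaction-weighted translation: $\tilde{\mathcal{N}}(\tilde{\mathcal{B}})$ (complexes $1,\dots,\tilde m$, vectors $\tilde y_{i'}$, kinetic vectors $(\tilde y_K)_{i'}$, weights $\tilde b(i',j')$, kinetically-relevant set $\tilde{\mathcal{C}}(\tilde{\mathcal{B}})$) is a reaction-weighted translation of $\mathcal{N}(\mathcal{K})$ if (1) there is a surjection $h:\mathcal{C}(\mathcal{K})\to\tilde{\mathcal{C}}(\tilde{\mathcal{B}})$ and numbers $\lambda(i,j')\ge0$ with (a) $\lambda(i,j')>0\Rightarrow(h(i),j')\in\tilde{\mathcal{R}}$, (b) $\sum_{\{i:h(i)=i'\}}\lambda(i,j')=\tilde b(i',j')$, (c) $\sum_{j\ne i}k(i,j)(y_j-y_i)=\sum_{j'\ne h(i)}\lambda(i,j')(\tilde y_{j'}-\tilde y_{h(i)})$; and (2) there is an injection $h_K:\tilde{\mathcal{C}}(\tilde{\mathcal{B}})\to\mathcal{C}(\mathcal{K})$ with $h(h_K(i'))=i'$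 and $(\tilde y_K)_{i'}=y_{h_K(i')}$. It is improper if $h$ is not injective. $\tilde{\mathcal{C}}_I=\{k'\in\tilde{\mathcal{C}}(\tilde{\mathcal{B}}):h(i)=h(j)=k'\text{ for some }i\ne j\}$; $h^{-1}(k')=\{i:h(i)=k'\}$; $\tilde S_I=\mathrm{span}\{y_j-y_i:i,j\in h^{-1}(k'),k'\in\tilde{\mathcal{C}}_I\}$; $\tilde S_K$ is the kinetic-order subspace of $\tilde{\mathcal{N}}$. Resolving complex set (when $\tilde{\mathcal{N}}$ is weakly reversible and $\tilde S_I\subseteq\tilde S_K$): $\tilde{\mathcal{C}}_R\subseteq\tilde{\mathcal{C}}(\tilde{\mathcal{B}})$ such that for every $i,j\in h^{-1}(k')$, $k'\in\tilde{\mathcal{C}}_I$, there are constants $c(i',j')$, $i'<j'$, with (1) $y_j-y_i=\sum_{i'<j'}c(i',j')(y_{h_K(j')}-y_{h_K(i')})$; (2) $c(i',j')\ne0$ implies $i',j'$ in the same linkage class of $\tilde{\mathcal{N}}$; (3) $c(i',j')\ne0$ implies $i',j'\in\tilde{\mathcal{C}}_R$. Steady state equivalence: the two (generalized) mass action systems have the same steady states. Steady state resolvable: there exists a reaction-weight set $\tilde{\mathcal{K}}$ for $(\tilde{\mathcal{S}},\tilde{\mathcal{C}},\tilde{\mathcal{C}}_K,\tilde{\mathcal{R}})$ such that $\mathcal{N}(\mathcal{K})$ and $\tilde{\mathcal{N}}(\tilde{\mathcal{K}})$ are steady state equivalent. *)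

(* Defs.v *)
From HB Require Import structures.
From mathcomp Require Import all_boot all_order all_algebra.
From mathcomp Require Import reals exp.
Set Implicit Arguments. Unset Strict Implicit. Unset Printing Implicit Defensive.
Import Order.TTheory GRing.Theory Num.Theory.
Local Open Scope ring_scope.

Section CRN.
Variable R : realType.
Variable n : nat. (* number of species *)

Definition cvec (v : 'I_n -> nat) : 'rV[R]_n := \row_s (v s)%:R.
Definition rvec (v : 'I_n -> R) : 'rV[R]_n := \row_s v s.

Section Net.
Variable m : nat. (* number of complexes *)

Definition is_crn (y : 'I_m -> 'I_n -> nat) (Rr : rel 'I_m) : Prop :=
  injective y /\ forall i, ~~ Rr i i.

Definition weight_set (Rr : rel 'I_m) (k : 'I_m -> 'I_m -> R) : Prop :=
  forall i j, (Rr i j -> 0 < k i j) /\ (~~ Rr i j -> k i j = 0).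

Definition symR (Rr : rel 'I_m) : rel 'I_m := fun a b => Rr a b || Rr b a.

Definition weakly_reversible (Rr : rel 'I_m) : Prop :=
  forall i j, connect (symR Rr) i j -> connect Rr i j.

Definition n_linkage (Rr : rel 'I_m) : nat := n_comp (symR Rr) predT.

Definition stoich_space (y : 'I_m -> 'I_n -> nat) (Rr : rel 'I_m) : 'M[R]_n :=
  (\sum_(p : 'I_m * 'I_m | Rr p.1 p.2) <<cvec (y p.2) - cvec (y p.1)>>)%MS.

Definition kin_space (yK : 'I_m -> 'I_n -> R) (Rr : rel 'I_m) : 'M[R]_n :=
  (\sum_(p : 'I_m * 'I_m | Rr p.1 p.2) <<rvec (yK p.2) - rvec (yK p.1)>>)%MS.

Definition deficiency (y : 'I_m -> 'I_n -> nat) (Rr : rel 'I_m) : int :=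
  (m%:Z - (n_linkage Rr)%:Z - (\rank (stoich_space y Rr))%:Z)%R.

Definition react_vec (y : 'I_m -> 'I_n -> nat) (k : 'I_m -> 'I_m -> R) (i : 'I_m)
  : 'rV[R]_n := \sum_(j | j != i) k i j *: (cvec (y j) - cvec (y i)).

Definition kin_rel (y : 'I_m -> 'I_n -> nat) (k : 'I_m -> 'I_m -> R) : pred 'I_m :=
  fun i => react_vec y k i != 0.

Definition Ymx (y : 'I_m -> 'I_n -> nat) : 'M[R]_(n, m) := \matrix_(s, i) (y i s)%:R.
Definition Amx (k : 'I_m -> 'I_m -> R) : 'M[R]_m :=
  \matrix_(i, j) if i == j then - \sum_(l | l != i) k i l else k j i.
Definition Psi (yK : 'I_m -> 'I_n -> R) (x : 'cV[R]_n) : 'cV[R]_m :=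
  \col_i \prod_s (x s 0) `^ (yK i s).

Definition gma_rhs (y : 'I_m -> 'I_n -> nat) (k : 'I_m -> 'I_m -> R)
  (yK : 'I_m -> 'I_n -> R) (x : 'cV[R]_n) : 'cV[R]_n :=
  Ymx y *m Amx k *m Psi yK x.

Definition ma_rhs (y : 'I_m -> 'I_n -> nat) (k : 'I_m -> 'I_m -> R) (x : 'cV[R]_n)
  : 'cV[R]_n := gma_rhs y k (fun i s => (y i s)%:R) x.
End Net.

Definition pos_vec (x : 'cV[R]_n) : Prop := forall s, 0 < x s 0.

Section Transl.
Variables (m mt : nat).
Variables (y : 'I_m -> 'I_n -> nat) (Rr : rel 'I_m) (k : 'I_m -> 'I_m -> R).
Variables (ty : 'I_mt -> 'I_n -> nat) (tyK : 'I_mt -> 'I_n -> R) (tR : rel 'I_mt)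
          (tb : 'I_mt -> 'I_mt -> R).
Variables (h : 'I_m -> 'I_mt) (hK : 'I_mt -> 'I_m) (lam : 'I_m -> 'I_mt -> R).

Let CK := kin_rel y k.
Let tCB := kin_rel ty tb.

Definition rw_translation : Prop :=
  [/\
      (forall i, CK i -> tCB (h i)),
      (forall i', tCB i' -> exists2 i, CK i & h i = i') &
      (forall i j', CK i -> 0 <= lam i j')] /\
  [/\
      (forall i j', CK i -> 0 < lam i j' -> tR (h i) j'),
      (forall i' j', tCB i' -> \sum_(i | CK i && (h i == i')) lam i j' = tb i' j'),
      (forall i, CK i -> react_vec y k i =
          \sum_(j' | j' != h i) lam i j' *: (cvec (ty j') - cvec (ty (h i)))) &
      (forall i', tCB i' -> [/\ CK (hK i'), h (hK i') = i' &
                                 forall s, tyK i' s = (y (hK i') s)%:R])].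

Definition improper : Prop :=
  exists i j, [/\ CK i, CK j, i != j & h i = h j].

Definition CI : pred 'I_mt := fun k' =>
  tCB k' && [exists i, exists j, [&& i != j, CK i, CK j, h i == k' & h j == k']].

Definition SI : 'M[R]_n :=
  (\sum_(p : 'I_m * 'I_m | [&& CK p.1, CK p.2, h p.1 == h p.2 & CI (h p.1)])
      <<cvec (y p.2) - cvec (y p.1)>>)%MS.

Definition resolving (CR : {set 'I_mt}) : Prop :=
  (forall i', i' \in CR -> tCB i') /\
  forall k' i j, CI k' -> CK i -> CK j -> h i = k' -> h j = k' ->
    exists c : 'I_mt -> 'I_mt -> R,
      [/\ cvec (y j) - cvec (y i) =
            \sum_(i' : 'I_mt) \sum_(j' : 'I_mt | (i' < j')%N)
               c i' j' *: (cvec (y (hK j')) - cvec (y (hK i'))),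
          (forall i' j' : 'I_mt, (i' < j')%N -> c i' j' != 0 -> connect (symR tR) i' j') &
          (forall i' j' : 'I_mt, (i' < j')%N -> c i' j' != 0 -> i' \in CR /\ j' \in CR)].
End Transl.
End CRN.

(* Main.v *)
Require Import Defs.
From HB Require Import structures.
From mathcomp Require Import all_boot all_order all_algebra.
From mathcomp Require Import reals exp.
From mathcomp Require Import sequences zify.
From Stdlib Require Import Classical.
From mathcomp Require Import ring.
Set Implicit Arguments. Unset Strict Implicit. Unset Printing Implicit Defensive.
Import Order.TTheory GRing.Theory Num.Theory.
Local Open Scope ring_scope.


Lemma argmaxex (R : realType) (T : finType) (P : pred T) (f : T -> R) a :
  P a -> exists2 v, P v & forall w, P w -> f w <= f v.
Proof.
move=> Pa; case: (@arg_maxP _ _ T a P f Pa) => v Pv H; by exists v.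
Qed.

Section Cut.
Variables (mt : nat) (tR : rel 'I_mt) (CIp : pred 'I_mt) (Kf : 'I_mt -> 'I_mt).
Hypothesis KfP : forall p, CIp p -> Kf p != p.

Definition eA p : rel 'I_mt := fun u v => tR u v && (v != Kf p).
Definition Fn v := [exists p, CIp p && connect (eA p) p v].
Definition Nn v := ~~ Fn v.
Definition eF : rel 'I_mt := fun u v => tR u v && Fn u.

Lemma CI_F p : CIp p -> Fn p.
Proof. by move=> Cp; apply/existsP; exists p; rewrite Cp connect0. Qed.

Lemma N_nCI v : Nn v -> ~~ CIp v.
Proof. by apply: contra => /CI_F; rewrite /Nn => ->. Qed.

Lemma eF_from_N v t : Nn v -> connect eF v t -> t = v.
Proof.
move=> Nv /connectP [[|x s] /= Hp ->] //.
by move: Hp => /andP [/andP [_ Fv] _]; move: Nv; rewrite /Nn Fv.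
Qed.

Lemma path_eA p v s : path eF v s -> Kf p \notin s -> path (eA p) v s.
Proof.
elim: s v => [//|x s IH] v /= /andP [/andP [e _] Hs].
rewrite in_cons negb_or => /andP [nx ns].
by rewrite /eA e eq_sym nx /= IH.
Qed.

Lemma uniq_exit n v s1 s2 : (size s1 < n)%N -> path eF v s1 -> Nn (last v s1) ->
  path eF v s2 -> Nn (last v s2) -> last v s1 = last v s2.
Proof.
elim: n v s1 s2 => [//|n IH] v s1 s2 Hsz P1 N1 P2 N2.
case Nv: (Nn v).
  have e1 : connect eF v (last v s1) by apply/connectP; exists s1.
  have e2 : connect eF v (last v s2) by apply/connectP; exists s2.
  by rewrite (eF_from_N Nv e1) (eF_from_N Nv e2).
move: Nv; rewrite /Nn => /negbFE /existsP [p /andP [Cp Cpv]].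
have key : forall s, path eF v s -> Nn (last v s) -> Kf p \in s.
  move=> s Ps Ns; apply/negPn/negP => ns.
  have : connect (eA p) p (last v s).
    apply: connect_trans Cpv _; apply/connectP; exists s => //.
    exact: path_eA.
  move=> Hc; move: Ns; rewrite /Nn => /negP; apply; apply/existsP; exists p.
  by rewrite Cp Hc.
have k1 := key _ P1 N1; have k2 := key _ P2 N2.
move: P1 N1 Hsz; case/splitPr: k1 => [a1 b1].
rewrite cat_path last_cat /= => /andP [_ /andP [_ Pb1]] Nb1 Hsz.
move: P2 N2; case/splitPr: k2 => [a2 b2].
rewrite cat_path last_cat /= => /andP [_ /andP [_ Pb2]] Nb2.
case Nk: (Nn (Kf p)).
  have e1 : connect eF (Kf p) (last (Kf p) b1) by apply/connectP; exists b1.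
  have e2 : connect eF (Kf p) (last (Kf p) b2) by apply/connectP; exists b2.
  by rewrite (eF_from_N Nk e1) (eF_from_N Nk e2).
apply: IH => //.
move: Hsz; rewrite size_cat /=; lia.
Qed.

Lemma uniq_exitC v t1 t2 : connect eF v t1 -> Nn t1 -> connect eF v t2 -> Nn t2 -> t1 = t2.
Proof.
move=> /connectP [s1 P1 ->] N1 /connectP [s2 P2 ->] N2.
exact: (@uniq_exit (size s1).+1).
Qed.

Lemma exit_ex u a : connect tR u a -> Nn a -> exists2 t, connect eF u t & Nn t.
Proof.
move=> /connectP [s Ps ->] Na.
elim: s u Ps Na => [|x s IH] u /=; first by move=> _ Nu; exists u.
move=> /andP [e Ps] Na.
case Nu: (Nn u); first by exists u.
have [t ct Nt] := IH x Ps Na.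
exists t => //; apply: connect_trans ct; apply: connect1.
by rewrite /eF e; move: Nu; rewrite /Nn => /negbFE ->.
Qed.

Lemma back_closed (X : pred 'I_mt) : (forall v u, tR v u -> X u -> X v) ->
  forall v w, connect tR v w -> X w -> X v.
Proof.
move=> H v w /connectP [s Ps ->].
elim: s v Ps => [//|x s IH] v /= /andP [e Ps] Xl.
exact: (H _ _ e (IH _ Ps Xl)).
Qed.

Variable R : realType.
Variables (kap W W' : 'I_mt -> 'I_mt -> R) (z z' : 'I_mt -> R).
Hypotheses (kpos : forall u v, tR u v -> 0 < kap u v) (kge0 : forall u v, 0 <= kap u v).
Hypotheses (Wrow : forall u, ~~ CIp u -> forall v, W u v = kap u v * z u)
           (W'row : forall u, ~~ CIp u -> forall v, W' u v = kap u v * z' u).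
Hypotheses (Wnon : forall u v, ~~ tR u v -> W u v = 0)
           (W'non : forall u v, ~~ tR u v -> W' u v = 0).
Hypotheses (zpos : forall u, 0 < z u) (z'pos : forall u, 0 < z' u).
Hypotheses (bal : forall v, \sum_u W v u = \sum_u W u v)
           (bal' : forall v, \sum_u W' v u = \sum_u W' u v).
Hypothesis WR : forall i j, connect tR i j -> connect tR j i.

Lemma cut_flux (X : pred 'I_mt) (V : 'I_mt -> 'I_mt -> R) :
  (forall v, \sum_u V v u = \sum_u V u v) ->
  \sum_(v | X v) \sum_(u | ~~ X u) V v u = \sum_(v | ~~ X v) \sum_(u | X u) V v u.
Proof.
move=> B.
have : \sum_(v | X v) \sum_u V v u = \sum_(v | X v) \sum_u V u v.
  by apply: eq_bigr => v _; apply: B.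
rewrite (eq_bigr (fun v => \sum_(u | X u) V v u + \sum_(u | ~~ X u) V v u));
  last by move=> v _; rewrite (bigID X).
rewrite big_split /= => H.
have E : \sum_(v | X v) \sum_u V u v =
   \sum_(u | X u) \sum_(v | X v) V u v + \sum_(u | ~~ X u) \sum_(v | X v) V u v.
  by rewrite exchange_big /= (bigID X).
by move: H; rewrite E => /addrI.
Qed.

Lemma cut_ratio a b : Nn a -> Nn b -> connect tR a b -> z' a / z a = z' b / z b.
Proof.
move=> Na Nb cab.
pose r v := z' v / z v.
pose C v := connect tR a v.
have [v0 /andP [Cv0 Nv0] Hmax] := @argmaxex R _ (fun v => C v && Nn v) r a
   (introT andP (conj (connect0 tR a) Na)).
pose M := r v0.
pose X v := C v && [forall t, (connect eF v t && Nn t) ==> (r t == M)].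
have CfwdE : forall v u, tR v u -> C v -> C u.
  by move=> v u e Cv; apply: connect_trans Cv (connect1 e).
have CbwdE : forall v u, tR v u -> C u -> C v.
  move=> v u e Cu; apply: WR; apply: connect_trans (connect1 e) (WR Cu).
have XN : forall v, Nn v -> X v = C v && (r v == M).
  move=> v Nv; rewrite /X; congr (_ && _); apply/forallP/idP.
    by move=> /(_ v); rewrite connect0 Nv.
  by move=> /eqP H t; apply/implyP => /andP [ct _]; rewrite (eF_from_N Nv ct) H.
have Xfwd : forall v u, X v -> Fn v -> tR v u -> X u.
  move=> v u /andP [Cv /forallP Hv] Fv e; rewrite /X (CfwdE _ _ e Cv) /=.
  apply/forallP => t; apply/implyP => /andP [ct Nt].
  have := Hv t; rewrite Nt andbT => /implyP; apply.
  by apply: connect_trans ct; apply: connect1; rewrite /eF e Fv.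
have Xbwd : forall v u, Fn v -> tR v u -> X u -> X v.
  move=> v u Fv e /andP [Cu /forallP Hu]; rewrite /X (CbwdE _ _ e Cu) /=.
  apply/forallP => t; apply/implyP => /andP [ct Nt].
  have [t' ct' Nt'] := exit_ex (WR Cu) Na.
  have := Hu t'; rewrite ct' Nt' /= => /eqP <-.
  have ct'' : connect eF v t'.
    by apply: connect_trans ct'; apply: connect1; rewrite /eF e Fv.
  by rewrite (uniq_exitC ct Nt ct'' Nt').
have out_eq : forall v u, X v -> ~~ X u -> W' v u = M * W v u.
  move=> v u Xv nXu; case e: (tR v u); last by rewrite Wnon ?e // W'non ?e // mulr0.
  case Nv: (Nn v); last first.
    by move: nXu; rewrite (Xfwd v u Xv) //; move: Nv; rewrite /Nn => /negbFE.
  move: Xv; rewrite XN // => /andP [_ /eqP rv].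
  rewrite Wrow ?N_nCI // W'row ?N_nCI //.
  have : z' v = M * z v by rewrite -rv /r divfK // gt_eqF.
  by move=> ->; rewrite mulrCA.
have in_le : forall v u, ~~ X v -> X u -> W' v u <= M * W v u ?= iff ~~ tR v u.
  move=> v u nXv Xu; case e: (tR v u); last first.
    by rewrite Wnon ?e // W'non ?e // mulr0; apply/leifP; rewrite /= eqxx.
  have Cv : C v by apply: (CbwdE _ _ e); case/andP: Xu.
  case Nv: (Nn v); last first.
    by move: nXv; rewrite (Xbwd v u) //; move: Nv; rewrite /Nn => /negbFE.
  have rle : r v <= M by apply: Hmax; rewrite Cv Nv.
  have rne : r v != M by move: nXv; rewrite XN // Cv.
  have rlt : r v < M by rewrite lt_neqAle rne rle.
  rewrite Wrow ?N_nCI // W'row ?N_nCI //; apply/leifP => /=.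
  have -> : z' v = r v * z v by rewrite /r divfK // gt_eqF.
  rewrite mulrCA ltr_pM2r //; apply: mulr_gt0 => //; exact: kpos.
have noin : forall v u, ~~ X v -> X u -> ~~ tR v u.
  have Hcut := cut_flux X bal; have Hcut' := cut_flux X bal'.
  have Hout : \sum_(v | X v) \sum_(u | ~~ X u) W' v u =
              M * \sum_(v | X v) \sum_(u | ~~ X u) W v u.
    rewrite mulr_sumr; apply: eq_bigr => v Xv; rewrite mulr_sumr.
    by apply: eq_bigr => u nXu; apply: out_eq.
  have Hle : \sum_(v | ~~ X v) \sum_(u | X u) W' v u <=
             \sum_(v | ~~ X v) \sum_(u | X u) M * W v u
             ?= iff [forall (v | ~~ X v), [forall (u | X u), ~~ tR v u]].
    apply: leif_sum => v nXv; apply: leif_sum => u Xu; exact: in_le.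
  have Heq : \sum_(v | ~~ X v) \sum_(u | X u) W' v u =
             \sum_(v | ~~ X v) \sum_(u | X u) M * W v u.
    rewrite -Hcut' Hout Hcut mulr_sumr; apply: eq_bigr => v _; by rewrite mulr_sumr.
  move: (Hle.2); rewrite Heq eqxx => /esym Hall v u nXv Xu.
  move: Hall => /forallP /(_ v) /implyP /(_ nXv) /forallP /(_ u) /implyP /(_ Xu).
  done.
have Xclosed : forall v u, tR v u -> X u -> X v.
  by move=> v u e Xu; apply/negPn/negP => nXv; move: (noin v u nXv Xu); rewrite e.
have Xv0 : X v0 by rewrite XN // Cv0 eqxx.
have Xa : X a := back_closed Xclosed Cv0 Xv0.
have Xb : X b := back_closed Xclosed (connect_trans (WR cab) Cv0) Xv0.
move: Xa Xb; rewrite !XN // => /andP [_ /eqP ra] /andP [_ /eqP rb].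
by change (r a = r b); rewrite ra rb.
Qed.

End Cut.


Section Defi.
Variables (R : realType) (n mt : nat) (ty : 'I_mt -> 'I_n -> nat) (tR : rel 'I_mt).

Definition Imf (f : 'I_mt -> 'I_mt -> R) : 'rV[R]_n :=
  \sum_u \sum_v f u v *: (cvec R (ty v) - cvec R (ty u)).

Definition dl (u : 'I_mt) : 'rV[R]_mt := delta_mx 0 u.
Definition Yt : 'M[R]_(mt, n) := \matrix_(u, s) (ty u s)%:R.
Definition Imx : 'M[R]_mt := (\sum_(p : 'I_mt * 'I_mt | tR p.1 p.2) <<dl p.2 - dl p.1>>)%MS.

Lemma dlY u : dl u *m Yt = cvec R (ty u).
Proof. by rewrite /dl -rowE; apply/rowP => s; rewrite !mxE. Qed.

Lemma rank_S : \rank (stoich_space R ty tR) = \rank (Imx *m Yt).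
Proof.
rewrite /Imx /stoich_space.
rewrite (sumsmxMr_gen _ _ _).
apply: eqmx_rank; apply/eqmxP; apply: eqmx_sums => p _.
apply: eqmx_trans (genmxE _) _; apply: eqmx_trans _ (eqmx_sym (genmxE _)).
apply: eqmx_trans _ (eqmx_sym (eqmxMr Yt (genmxE _))).
by rewrite mulmxBl !dlY.
Qed.


Definition eS : rel 'I_mt := symR tR.
Lemma eS_sym : connect_sym eS.
Proof. by apply: sym_connect_sym => u v; rewrite /eS /symR orbC. Qed.

Definition Pm : 'M[R]_mt := \matrix_(u, r) (fingraph.root eS u == r)%:R.

Lemma Imx_ker : (Imx <= kermx Pm)%MS.
Proof.
apply/sumsmx_subP => p e; rewrite genmxE sub_kermx mulmxBl /dl -!rowE.
have -> : row p.2 Pm = row p.1 Pm.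
  apply/rowP => r; rewrite !mxE.
  have /(fingraph.rootP eS_sym) -> // : connect eS p.1 p.2.
  by apply: connect1; rewrite /eS /symR e.
by rewrite subrr.
Qed.

Lemma rank_Pm : (n_linkage tR <= \rank Pm)%N.
Proof.
rewrite /n_linkage -/eS.
set A := predI (fingraph.roots eS) (mem predT).
pose E : 'M[R]_(#|A|, mt) := \matrix_(k, u) (u == enum_val k)%:R.
have HE : E *m Pm *m E^T = 1%:M.
  apply/matrixP => k l; rewrite !mxE.
  rewrite (bigD1 (enum_val l)) //= big1; last first.
    by move=> w /negbTE nw; rewrite !mxE nw mulr0.
  rewrite !mxE eqxx mulr1 addr0.
  rewrite (bigD1 (enum_val k)) //= big1; last first.
    by move=> w /negbTE nw; rewrite !mxE nw mul0r.
  rewrite !mxE eqxx mul1r addr0.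
  have : enum_val k \in A by apply: enum_valP.
  rewrite inE /= andbT => /eqP ->.
  by rewrite (inj_eq enum_val_inj) eq_sym.
have -> : n_comp eS predT = #|A| by [].
have := mxrank1 R #|A|; rewrite -HE => <-.
apply: leq_trans (mxrankM_maxl _ _) _; exact: mxrankM_maxr.
Qed.

Lemma rank_Imx : (\rank Imx <= mt - n_linkage tR)%N.
Proof.
apply: leq_trans (mxrankS Imx_ker) _; rewrite mxrank_ker.
have := rank_Pm; lia.
Qed.


Definition dvec (f : 'I_mt -> 'I_mt -> R) : 'rV[R]_mt := \sum_u \sum_v f u v *: (dl v - dl u).

Lemma Imf_dvec f : Imf f = dvec f *m Yt.
Proof.
rewrite /Imf /dvec mulmx_suml; apply: eq_bigr => u _; rewrite mulmx_suml.
by apply: eq_bigr => v _; rewrite -scalemxAl mulmxBl !dlY.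
Qed.

Lemma dvec_in f : (forall u v, ~~ tR u v -> f u v = 0) -> (dvec f <= Imx)%MS.
Proof.
move=> Hf; apply/summx_sub => u _; apply/summx_sub => v _.
case e: (tR u v); last by rewrite Hf ?e // scale0r sub0mx.
apply: scalemx_sub; rewrite /Imx.
by apply: (sumsmx_sup (u, v)) => //; rewrite genmxE.
Qed.

Lemma dvecE f w : dvec f 0 w = \sum_u f u w - \sum_v f w v.
Proof.
rewrite /dvec summxE.
rewrite (eq_bigr (fun u => f u w - (u == w)%:R * \sum_v f u v)); last first.
  move=> u _; rewrite summxE.
  rewrite (eq_bigr (fun v => f u v * (v == w)%:R - f u v * (u == w)%:R)); last first.
    by move=> v _; rewrite !mxE /= mulrBr ![w == _]eq_sym.
  rewrite sumrB -big_distrl /= mulrC; congr (_ - _).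
  under eq_bigr => v _ do rewrite mulr_natr mulrb.
  by rewrite -big_mkcond /= big_pred1_eq.
rewrite sumrB; congr (_ - _).
under eq_bigr => u _ do rewrite mulr_natl mulrb.
by rewrite -big_mkcond /= big_pred1_eq.
Qed.

Lemma def0_bal f : deficiency R ty tR = 0 -> (forall u v, ~~ tR u v -> f u v = 0) ->
  Imf f = 0 -> forall w, \sum_v f w v = \sum_u f u w.
Proof.
move=> D0 Hf I0 w.
have Hrk : (\rank (Imx :&: kermx Yt) = 0)%N.
  have E1 := mxrank_mul_ker Imx Yt.
  have E2 := rank_Imx.
  have E3 : (\rank (stoich_space R ty tR) + n_linkage tR = mt)%N.
    move/eqP: D0; rewrite /deficiency subr_eq0 subr_eq -PoszD => /eqP [H].
    by rewrite {3}H addnC.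
  rewrite -rank_S in E1; lia.
have : (dvec f <= Imx :&: kermx Yt)%MS.
  rewrite sub_capmx (dvec_in Hf) /= sub_kermx -Imf_dvec I0 //.
move/eqP: Hrk; rewrite mxrank_eq0 => /eqP ->; rewrite submx0 => /eqP d0.
by apply/eqP; rewrite eq_sym -subr_eq0 -dvecE d0 mxE.
Qed.

End Defi.


Lemma gma_rhsE (R : realType) (n m : nat) (yy : 'I_m -> 'I_n -> nat)
  (kk : 'I_m -> 'I_m -> R) (yK : 'I_m -> 'I_n -> R) (x : 'cV[R]_n) :
  gma_rhs yy kk yK x = (\sum_j Psi yK x j 0 *: react_vec yy kk j)^T.
Proof.
apply/matrixP => s o; rewrite !mxE (ord1 o) summxE.
apply: eq_bigr => j _; rewrite !mxE mulrC; congr (_ * _).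
rewrite /react_vec summxE.
rewrite (bigD1 j) //= !mxE eqxx.
rewrite [X in _ + X = _](eq_bigr (fun i => (yy i s)%:R * kk j i)); last first.
  by move=> i /negbTE nij; rewrite !mxE nij.
rewrite [RHS](eq_bigr (fun k => kk j k * (yy k s)%:R - kk j k * (yy j s)%:R)); last first.
  by move=> k _; rewrite !mxE mulrBr.
rewrite sumrB addrC; congr (_ + _).
  by apply: eq_bigr => i _; rewrite mulrC.
by rewrite mulrN -mulr_suml mulrC.
Qed.


Section Ex.
Variables (R : realType) (n : nat).
Definition Lg (g : 'I_n -> R) (w : 'rV[R]_n) : R := \sum_s w 0 s * g s.
Definition Lx (x : 'cV[R]_n) (w : 'rV[R]_n) : R := Lg (fun s => ln (x s 0)) w.

Lemma LgD g w1 w2 : Lg g (w1 + w2) = Lg g w1 + Lg g w2.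
Proof. by rewrite /Lg -big_split; apply: eq_bigr => s _; rewrite mxE mulrDl. Qed.
Lemma LgN g w : Lg g (- w) = - Lg g w.
Proof. by rewrite /Lg -sumrN; apply: eq_bigr => s _; rewrite mxE mulNr. Qed.
Lemma LgB g w1 w2 : Lg g (w1 - w2) = Lg g w1 - Lg g w2.
Proof. by rewrite LgD LgN. Qed.
Lemma LgZ g a w : Lg g (a *: w) = a * Lg g w.
Proof. by rewrite /Lg mulr_sumr; apply: eq_bigr => s _; rewrite mxE mulrA. Qed.
Lemma Lg_sum (I : finType) (P : pred I) g (F : I -> 'rV[R]_n) :
  Lg g (\sum_(i | P i) F i) = \sum_(i | P i) Lg g (F i).
Proof.
rewrite /Lg; under eq_bigr => s _ do rewrite summxE mulr_suml.
by rewrite exchange_big.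
Qed.
Lemma LgDiff (x x' : 'cV[R]_n) w : Lg (fun s => ln (x s 0) - ln (x' s 0)) w = Lx x w - Lx x' w.
Proof. by rewrite /Lx /Lg -sumrB; apply: eq_bigr => s _; rewrite mulrBr. Qed.

Lemma prod_powR (x : 'cV[R]_n) (v : 'I_n -> R) : pos_vec x ->
  \prod_s (x s 0) `^ (v s) = expR (Lx x (rvec v)).
Proof.
move=> px; rewrite /Lx /Lg expR_sum; apply: eq_bigr => s _.
by rewrite /powR gt_eqF // mxE.
Qed.

Lemma prod_powRn (x : 'cV[R]_n) (v : 'I_n -> nat) : pos_vec x ->
  \prod_s (x s 0) `^ (v s)%:R = expR (Lx x (cvec R v)).
Proof.
move=> px; rewrite /Lx /Lg expR_sum; apply: eq_bigr => s _.
by rewrite /powR gt_eqF // mxE.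
Qed.
End Ex.

Lemma path_eA_neq mt (tR : rel 'I_mt) Kf p x s : path (eA tR Kf p) x s ->
  forall w, w \in s -> w != Kf p.
Proof.
elim: s x => [//|z s IH] x /= /andP [/andP [_ zK] Ps] w.
rewrite in_cons => /orP [/eqP ->|ws]; first by [].
exact: (IH _ Ps w ws).
Qed.

Lemma trmx_eq0 (R : realType) (n : nat) (A : 'rV[R]_n) (B : 'rV[R]_n) :
  A = B -> (A^T = 0 <-> B = 0).
Proof.
move=> ->; split => [H|->]; last by rewrite trmx0.
by rewrite -[B]trmxK H trmx0.
Qed.

Theorem lemma6p1 (R : realType) (n m mt : nat)
  (y : 'I_m -> 'I_n -> nat) (Rr : rel 'I_m) (k : 'I_m -> 'I_m -> R)
  (ty : 'I_mt -> 'I_n -> nat) (tyK : 'I_mt -> 'I_n -> R) (tR : rel 'I_mt)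
  (tb : 'I_mt -> 'I_mt -> R)
  (h : 'I_m -> 'I_mt) (hK : 'I_mt -> 'I_m) (lam : 'I_m -> 'I_mt -> R) :
  is_crn y Rr -> weight_set Rr k ->
  is_crn ty tR -> weight_set tR tb ->
  rw_translation y k ty tyK tR tb h hK lam ->
  improper y k h ->
  weakly_reversible tR ->
  deficiency R ty tR = 0 ->
  (SI y k ty tb h <= kin_space tyK tR)%MS ->
  forall CR : {set 'I_mt},
  resolving y k ty tR tb h hK CR ->
  (forall i', i' \in CR -> ~~ CI y k ty tb h i') ->
  (forall p', CI y k ty tb h p' ->
     exists k', [/\ kin_rel ty tb k', k' != p' &
       forall i', i' \in CR -> forall s : seq 'I_mt,
         path tR p' s -> last p' s = i' -> uniq (p' :: s) -> k' \in p' :: s]) ->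
  exists tK : 'I_mt -> 'I_mt -> R, weight_set tR tK /\
    forall x : 'cV[R]_n, pos_vec x ->
      (ma_rhs y k x = 0 <-> gma_rhs ty tK tyK x = 0).
Proof.
move=> _ _ [_ tnoloop] wsB [[hCK hsurj lamge0] [lamR lamsum reactE hKP]] _ WR D0 _
  CR [CRtCB resol] CRnCI cutH.
have tbge0 : forall u v, 0 <= tb u v.
  move=> u v; case e: (tR u v); first by apply/ltW; case: (wsB u v) => + _; apply.
  by case: (wsB u v) => _ ->; rewrite ?e.
have tbnon : forall u v, ~~ tR u v -> tb u v = 0 by move=> u v; case: (wsB u v).
have tbpos : forall u v, tR u v -> 0 < tb u v by move=> u v; case: (wsB u v).
have lamnon : forall i v, (kin_rel y k) i -> ~~ tR (h i) v -> lam i v = 0.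
  move=> i v CKi ne; apply/eqP; rewrite eq_le lamge0 // andbT.
  by rewrite leNgt; apply/negP => /(lamR _ _ CKi); apply/negP.
have WRc : forall i j, connect tR i j -> connect tR j i.
  move=> i j cij; apply: WR; rewrite (eS_sym tR).
  by apply: connect_sub cij => u v e; apply: connect1; rewrite /eS /symR e.
have edge_tCB : forall u v, tR u v -> (kin_rel ty tb) u.
  move=> u v e; rewrite /kin_rel; apply/eqP => rv0.
  pose f a b := if a == u then tb u b else 0.
  have fnon : forall a b, ~~ tR a b -> f a b = 0.
    by move=> a b nab; rewrite /f; case: eqP => [Eau|] //; apply: tbnon; rewrite -Eau.
  have If : Imf ty f = 0.
    rewrite /Imf (bigD1 u) //=.
    rewrite [X in _ + X]big1 ?addr0; last first.
      by move=> a /negbTE na; apply: big1 => b _; rewrite /f na scale0r.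
    rewrite -[RHS]rv0 /react_vec (bigD1 u) //= subrr scaler0 add0r.
    by apply: eq_bigr => b _; rewrite /f eqxx.
  have := def0_bal D0 fnon If u.
  rewrite /f eqxx /=.
  rewrite -big_mkcond big_pred1_eq tbnon ?tnoloop // => /psumr_eq0P H.
  by move: (tbpos _ _ e); rewrite H ?ltxx.
have fiber : forall u, (kin_rel ty tb) u -> ~~ (CI y k ty tb h) u -> forall i, ((kin_rel y k) i && (h i == u)) = (i == hK u).
  move=> u Bu nCI i; have [CKh hh _] := hKP u Bu.
  apply/idP/eqP => [/andP [CKi /eqP hi]|->]; last by rewrite CKh hh eqxx.
  apply/eqP; apply/negPn/negP => nei; move: nCI; rewrite /CI Bu /=; apply/negP/negPn.
  apply/existsP; exists i; apply/existsP; exists (hK u).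
  by rewrite nei CKi CKh hi hh !eqxx.
pose X (x : 'cV[R]_n) i := \prod_s (x s 0) `^ (y i s)%:R.
have Xpos : forall x i, pos_vec x -> 0 < X x i.
  by move=> x i px; apply: prodr_gt0 => s _; apply: powR_gt0.
have XE : forall x i, pos_vec x -> X x i = expR (Lx x (cvec R (y i))).
  by move=> x i px; rewrite /X prod_powRn.
have [Kf HKf] : exists Kf : 'I_mt -> 'I_mt, forall p, (CI y k ty tb h) p ->
    [/\ (kin_rel ty tb) (Kf p), Kf p != p & forall i', i' \in CR -> forall s, path tR p s ->
       last p s = i' -> uniq (p :: s) -> Kf p \in p :: s].
  apply: (@fin_all_exists _ (fun _ => 'I_mt) (fun p k' => (CI y k ty tb h) p -> [/\ (kin_rel ty tb) k', k' != p &
    forall i', i' \in CR -> forall s, path tR p s -> last p s = i' -> uniq (p :: s) -> k' \in p :: s])).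
  move=> p; case CIpp: ((CI y k ty tb h) p); last by exists p.
  by have [k' Hk'] := cutH p CIpp; exists k'.
have NCR : forall a, a \in CR -> Nn tR (CI y k ty tb h) Kf a.
  move=> a aCR; rewrite /Nn /Fn; apply/negP => /existsP [p /andP [Cp /connectP [s Ps la]]].
  have [_ Kp Hcut] := HKf p Cp.
  move: la; case: (shortenP Ps) => s' Ps' us' subs' la.
  have Ptr : path tR p s' by apply: sub_path Ps' => u v /andP [].
  have := Hcut a aCR s' Ptr (esym la) us'.
  rewrite in_cons => /orP [/eqP E|]; first by move: Kp; rewrite E eqxx.
  by move=> /subs' /(path_eA_neq Ps); rewrite eqxx.
pose ad (F : 'I_mt -> 'I_mt -> R) x :=
  [/\ forall u v, ~~ tR u v -> F u v = 0,
      forall u, ~~ CI y k ty tb h u -> forall v, F u v = tb u v * X x (hK u) &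
      forall v, \sum_u F v u = \sum_u F u v].
have pin : forall x x' F F', pos_vec x -> pos_vec x' -> ad F x -> ad F' x' ->
   forall u i, kin_rel y k i -> h i = u -> X x i * X x' (hK u) = X x (hK u) * X x' i.
  move=> x x' F F' px px' [Fn Fr Fb] [F'n F'r F'b] u i CKi hi.
  have Bu : kin_rel ty tb u by rewrite -hi; apply: hCK.
  have [CKh hh _] := hKP u Bu.
  case CIu: (CI y k ty tb h u); last first.
    have : i == hK u by rewrite -fiber ?CIu // CKi hi eqxx.
    by move/eqP ->; rewrite mulrC.
  pose D := Lg (fun s => ln (x s 0) - ln (x' s 0)).
  have ratio : forall a b, a \in CR -> b \in CR -> connect tR a b ->
      D (cvec R (y (hK a))) = D (cvec R (y (hK b))).
    move=> a b aCR bCR cab.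
    have := @cut_ratio _ _ _ Kf _ tb F' F (fun u => X x' (hK u)) (fun u => X x (hK u))
      tbpos F'r Fr F'n Fn (fun u => Xpos _ _ px') F'b Fb WRc _ _ (NCR a aCR) (NCR b bCR) cab.
    by rewrite /D !LgDiff !XE // -!expRB => /expR_inj.
  have [c [Hc Hconn HCRc]] := resol u (hK u) i CIu CKh CKi hh hi.
  have HD : D (cvec R (y i)) - D (cvec R (y (hK u))) = 0.
    rewrite -LgB Hc Lg_sum big1 // => i' _; rewrite Lg_sum big1 // => j' lt.
    rewrite LgZ LgB; case: (eqVneq (c i' j') 0) => [->|cn]; first by rewrite mul0r.
    have [Ci Cj] := HCRc _ _ lt cn.
    have cji : connect tR j' i' by apply: WRc; apply: WR; apply: Hconn.
    by move: (ratio j' i' Cj Ci cji); rewrite /D => ->; rewrite subrr mulr0.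
  move: HD; rewrite /D !LgDiff !XE // -!expRD => HD; congr expR.
  by apply/eqP; rewrite -subr_eq0; apply/eqP; rewrite -HD; ring.
pose Ref := exists x, pos_vec x /\ exists F, ad F x.
have [xr [pxr Hxr]] : exists xr : 'cV[R]_n, pos_vec xr /\ (Ref -> exists F, ad F xr).
  case: (classic Ref) => [[x0 [px0 H0]]|nR]; first by exists x0.
  exists (const_mx 1); split; last by move=> /nR.
  by move=> s; rewrite mxE ltr01.
pose tK u v := \sum_(i | kin_rel y k i && (h i == u)) lam i v * (X xr i / X xr (hK u)).
have tKnon : forall u v, ~~ tR u v -> tK u v = 0.
  move=> u v ne; apply: big1 => i /andP [CKi /eqP hi].
  by rewrite lamnon ?mul0r // hi.
have tKnCI : forall u, ~~ CI y k ty tb h u -> forall v, tK u v = tb u v.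
  move=> u nCI v; case Bu: (kin_rel ty tb u).
    rewrite /tK -(lamsum u v Bu) !(eq_bigl _ _ (fiber u Bu nCI)) !big_pred1_eq.
    by rewrite divff ?mulr1 // gt_eqF // Xpos.
  rewrite /tK big1; last first.
    by move=> i /andP [CKi /eqP hi]; move: (hCK i CKi); rewrite hi Bu.
  by apply/esym/tbnon; apply/negP => /edge_tCB; rewrite Bu.
have tKws : weight_set tR tK.
  move=> u v; split; last exact: tKnon.
  move=> e; have Bu := edge_tCB u v e.
  have := tbpos _ _ e; rewrite -(lamsum u v Bu) => Hs.
  case: (pickP (fun i => (kin_rel y k i && (h i == u)) && (0 < lam i v))) => [i /andP [Fi li]|H0]; last first.
    exfalso; move: Hs; rewrite big1 ?ltxx // => i Fi; move: (H0 i); rewrite Fi /= => /negbT.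
    rewrite -leNgt => le; apply/eqP; rewrite eq_le le lamge0 //; by case/andP: Fi.
  rewrite /tK (bigD1 i) //=.
  rewrite addrC; apply: ltr_pwDr.
    by apply: mulr_gt0 => //; apply: divr_gt0; apply: Xpos.
  apply: sumr_ge0 => j /andP [/andP [CKj _] _].
  by apply: mulr_ge0; [apply: lamge0 | apply: divr_ge0; apply/ltW; apply: Xpos].
exists tK; split => // x px.
pose W u v := \sum_(i | kin_rel y k i && (h i == u)) lam i v * X x i.
pose G u v := tK u v * X x (hK u).
have Wnon : forall u v, ~~ tR u v -> W u v = 0.
  move=> u v ne; apply: big1 => i /andP [CKi /eqP hi].
  by rewrite lamnon ?mul0r // hi.
have Wrow : forall u, ~~ CI y k ty tb h u -> forall v, W u v = tb u v * X x (hK u).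
  move=> u nCI v; case Bu: (kin_rel ty tb u).
    by rewrite /W -(lamsum u v Bu) !(eq_bigl _ _ (fiber u Bu nCI)) !big_pred1_eq.
  rewrite /W big1; last first.
    by move=> i /andP [CKi /eqP hi]; move: (hCK i CKi); rewrite hi Bu.
  by rewrite tbnon ?mul0r //; apply/negP => /edge_tCB; rewrite Bu.
have Gnon : forall u v, ~~ tR u v -> G u v = 0 by move=> u v ne; rewrite /G tKnon ?mul0r.
have Grow : forall u, ~~ CI y k ty tb h u -> forall v, G u v = tb u v * X x (hK u).
  by move=> u nCI v; rewrite /G tKnCI.
have ImfEq : forall f g : 'I_mt -> 'I_mt -> R, (forall u v, f u v = g u v) -> Imf ty f = Imf ty g.
  by move=> f g Hfg; apply: eq_bigr => u _; apply: eq_bigr => v _; rewrite Hfg.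
have GW : (exists F, ad F x) -> forall u v, G u v = W u v.
  move=> HF; have [F' adF'] := Hxr (ex_intro _ x (conj px HF)).
  have [F adF] := HF.
  move=> u v; rewrite /G /tK mulr_suml; apply: eq_bigr => i /andP [CKi /eqP hi].
  have Hp := pin x xr F F' px pxr adF adF' u i CKi hi.
  rewrite -mulrA; congr (_ * _).
  rewrite mulrAC [X xr i * _]mulrC -Hp mulrK // unitfE gt_eqF //; exact: Xpos.
have origE : (ma_rhs y k x = 0) <-> Imf ty W = 0.
  rewrite /ma_rhs gma_rhsE.
  have -> : \sum_j Psi (fun i s => (y i s)%:R) x j 0 *: react_vec y k j = Imf ty W.
    rewrite (bigID (kin_rel y k)) /= [X in _ + X]big1 ?addr0; last first.
      by move=> i; rewrite /kin_rel negbK => /eqP ->; rewrite scaler0.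
    rewrite (partition_big h predT) //=.
    apply: eq_bigr => u _.
    rewrite (eq_bigr (fun v => \sum_(i | kin_rel y k i && (h i == u))
        (lam i v * X x i) *: (cvec R (ty v) - cvec R (ty u)))); last first.
      by move=> v _; rewrite scaler_suml.
    rewrite [RHS]exchange_big; apply: eq_bigr => i /andP [CKi /eqP hi]; subst u.
    rewrite reactE // scaler_sumr [RHS](bigD1 (h i)) //= subrr scaler0 add0r.
    apply: eq_bigr => v _; rewrite scalerA mulrC; congr (_ *: _); congr (_ * _).
    by rewrite /X mxE.
  by apply: trmx_eq0.
have gmaE : (gma_rhs ty tK tyK x = 0) <-> Imf ty G = 0.
  rewrite gma_rhsE.
  have -> : \sum_u Psi tyK x u 0 *: react_vec ty tK u = Imf ty G.
    apply: eq_bigr => u _; rewrite /react_vec scaler_sumr [RHS](bigD1 u) //= subrr scaler0 add0r.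
    apply: eq_bigr => v _; rewrite scalerA; congr (_ *: _).
    rewrite /G; case e: (tR u v); last by rewrite tKnon ?e // mulr0 mul0r.
    have [_ _ tyKe] := hKP u (edge_tCB u v e).
    rewrite mulrC !mxE /X; congr (_ * _); apply: eq_bigr => s _; by rewrite tyKe.
  by apply: trmx_eq0.
split.
  move/origE => I0.
  have Wb := def0_bal D0 Wnon I0.
  have adW : ad W x by split.
  by apply/gmaE; rewrite (ImfEq _ _ (GW (ex_intro _ W adW))).
move/gmaE => I0.
have Gb := def0_bal D0 Gnon I0.
have adG : ad G x by split.
by apply/origE; rewrite -(ImfEq _ _ (GW (ex_intro _ G adG))).
Qed.
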